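(* Let $\mathcal A$ be a category with finite colimits and initial object $\emptyset$, let $(\mathcal B,\Theta)$ be a category with nullhomotopies satisfying the reduced interchange, and let $\mathcal F\colon\mathcal A\to\mathcal B$ be a functor such that (a) $\mathcal F$ sends finite colimits of $\mathcal A$ to finite colimits of $\mathcal B$ which are $\Theta$-strong, and (b) for every arrow $a$ of $\mathcal A$, the arrow $\mathcal F(a)$ has a strong $\Theta$-cokernel in $\mathcal B$. Then there exists a morphism of categories with nullhomotopies $\widehat{\mathcal F}\colon(\mathrm{Arr}(\mathcal A),\Theta_\Delta)\to(\mathcal B,\Theta)$ which sends $\Theta_\Delta$-cokernels to strong $\Theta$-cokernels and satisfies $\Gamma\cdot\widehat{\mathcal F}\cong\mathcal F$; moreover such a morphism is unique up to isomorphism. Furthermore, $\widehat{\mathcal F}$ sends finite colimits of $\mathrm{Arr}(\mathcal A)$ to finite colimits of $\mathcal B$ which are $\Theta$-strong.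
   Context: Composition is written diagrammatically: for $f\colon A\to B$, $g\colon B\to C$, $f\cdot g\colon A\to C$. A structure of nullhomotopies $\Theta$ on a category $\mathcal B$ consists of: for each arrow $g$ a set $\Theta(g)$ (nullhomotopies on $g$), and for each composable $A\xrightarrow{f}B\xrightarrow{g}C\xrightarrow{h}D$ a map $f\circ-\circ h\colon\Theta(g)\to\Theta(f\cdot g\cdot h)$ such that $(f'\cdot f)\circ\varphi\circ(h\cdot h')=f'\circ(f\circ\varphi\circ h)\circ h'$ and $\mathrm{id}\circ\varphi\circ\mathrm{id}=\varphi$. One writes $f\circ\varphi$ and $\varphi\circ h$ when the other arrow is an identity. Reduced interchange: for all $f\colon A\to B$, $g\colon B\to C$, $\alpha\in\Theta(f)$, $\beta\in\Theta(g)$, one has $\alpha\circ g=f\circ\beta$ in $\Theta(f\cdot g)$. $\mathrm{Arr}(\mathcal A)$: objects are arrows $b\colon B\to B_0$ of $\mathcal A$, written $(B,b,B_0)$; arrows $(g,g_0)\colon(B,b,B_0)\to(C,c,C_0)$ are pairs with $b\cdot g_0=g\cdot c$. Its structure $\Theta_\Delta$: $\Theta_\Delta(g,g_0)=\{\varphi\colon B_0\to C\mid b\cdot\varphi=g,\ \varphi\cdot c=g_0\}$, with $(f,f_0)\circ\varphi\circ(h,h_0)=f_0\cdot\varphi\cdot h$. $\Gamma\colon\mathcal A\to\mathrm{Arr}(\mathcal A)$ sends $X$ to $(\emptyset,\emptyset_X,X)$ (where $\emptyset_X\colon\emptyset\to X$ is the unique arrow) and $g_0$ to $(\mathrm{id}_\emptyset,g_0)$.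 A morphism $\mathcal F\colon(\mathcal A,\Theta_{\mathcal A})\to(\mathcal B,\Theta_{\mathcal B})$ is a functor with maps $\mathcal F_g\colon\Theta_{\mathcal A}(g)\to\Theta_{\mathcal B}(\mathcal F g)$ such that $\mathcal F_{f\cdot g\cdot h}(f\circ\varphi\circ h)=\mathcal F f\circ\mathcal F_g(\varphi)\circ\mathcal F h$. A 2-morphism $\alpha\colon\mathcal F\Rightarrow\mathcal G$ between morphisms is a natural transformation with $\alpha_B\circ\mathcal G_g(\varphi)=\mathcal F_g(\varphi)\circ\alpha_C$ for all $g\colon B\to C$, $\varphi\in\Theta(g)$. Isomorphism means invertible 2-morphism. A $\Theta$-cokernel of $g\colon B\to C$ is a triple $(\mathcal C(g),\,c_g\colon C\to\mathcal C(g),\,\gamma_g\in\Theta(g\cdot c_g))$ such that for every $(D,\,h\colon C\to D,\,\varphi\in\Theta(g\cdot h))$ there is a unique $h'\colon\mathcal C(g)\to D$ with $c_g\cdot h'=h$ and $\gamma_g\circ h'=\varphi$. It is strong if for every $(D,\,h\colon\mathcal C(g)\to D,\,\varphi\in\Theta(c_g\cdot h))$ with $g\circ\varphi=\gamma_g\circ h$ there is a unique $\varphi'\in\Theta(h)$ with $c_g\circ\varphi'=\varphi$. A morphism sends $\Theta_\Delta$-cokernels to strong $\Theta$-cokernels if it maps each $\Theta_\Delta$-cokernel triple to a strong $\Theta$-cokernel triple of the image arrow. A colimit $\{i_D\colon\mathcal F D\to\mathrm{colim}\,\mathcal F\}_{D}$ of $\mathcal F\colon\mathcal D\to\mathcal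 B$ is $\Theta$-strong if for every object $X$ and every family $(\tau^a_D\colon\mathcal FD\to X,\ \tau^n_D\in\Theta(\tau^a_D))_{D\in\mathcal D}$ with $\mathcal F(g)\cdot\tau^a_{D'}=\tau^a_D$ and $\mathcal F(g)\circ\tau^n_{D'}=\tau^n_D$ for all $g\colon D\to D'$, there is a unique $t^n\in\Theta(t^a)$ with $i_D\circ t^n=\tau^n_D$ for all $D$, where $t^a$ is the induced arrow with $i_D\cdot t^a=\tau^a_D$. *)

(* Defs.v *)
From Stdlib Require Import List ProofIrrelevance.
Set Implicit Arguments.
Unset Strict Implicit.

Record Category := {
  Ob :> Type;
  Hom : Ob -> Ob -> Type;
  idm : forall X, Hom X X;
  comp : forall X Y Z, Hom X Y -> Hom Y Z -> Hom X Z;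
  comp_id_l : forall X Y (f : Hom X Y), comp (idm X) f = f;
  comp_id_r : forall X Y (f : Hom X Y), comp f (idm Y) = f;
  comp_assoc : forall W X Y Z (f : Hom W X) (g : Hom X Y) (h : Hom Y Z),
      comp (comp f g) h = comp f (comp g h)
}.
Arguments Hom {c} _ _.
Arguments idm {c} X.
Arguments comp {c X Y Z} _ _.
Notation "f ⋅ g" := (comp f g) (at level 40, left associativity).

Record Functor (C D : Category) := {
  fob :> Ob C -> Ob D;
  fmap : forall X Y, Hom X Y -> Hom (fob X) (fob Y);
  fmap_id : forall X, fmap (idm X) = idm (fob X);
  fmap_comp : forall X Y Z (f : Hom X Y) (g : Hom Y Z), fmap (f ⋅ g) = fmap f ⋅ fmap g
}.
Arguments fmap {C D} f0 {X Y} _.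

Program Definition fcomp {C D E : Category} (F : Functor C D) (G : Functor D E) : Functor C E :=
  {| fob := fun X => G (F X); fmap := fun X Y f => fmap G (fmap F f) |}.
Next Obligation. rewrite !fmap_id; reflexivity. Qed.
Next Obligation. rewrite !fmap_comp; reflexivity. Qed.

Unset Implicit Arguments.
Definition natural {C D : Category} (F G : Functor C D) (a : forall X, Hom (F X) (G X)) :=
  forall X Y (f : Hom X Y), fmap F f ⋅ a Y = a X ⋅ fmap G f.

Definition nat_iso {C D : Category} (F G : Functor C D) : Prop :=
  exists (a : forall X, Hom (F X) (G X)) (b : forall X, Hom (G X) (F X)),
    natural F G a /\ natural G F b /\
    (forall X, a X ⋅ b X = idm (F X)) /\ (forall X, b X ⋅ a X = idm (G X)).

(* ---------- Structures of nullhomotopies ----------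
   Encoded fibrewise: NH X Y is the disjoint union over g : X -> Y of Theta(g);
   bd phi is the arrow g with phi in Theta(g); wh f phi h is  f o phi o h. *)
Set Implicit Arguments.
Record NHStruct (C : Category) := {
  NH : Ob C -> Ob C -> Type;
  bd : forall X Y, NH X Y -> Hom X Y;
  wh : forall X0 X1 X2 X3, Hom X0 X1 -> NH X1 X2 -> Hom X2 X3 -> NH X0 X3;
  bd_wh : forall X0 X1 X2 X3 (f : Hom X0 X1) (p : NH X1 X2) (h : Hom X2 X3),
      bd (wh f p h) = f ⋅ bd p ⋅ h;
  wh_comp : forall X0' X0 X1 X2 X3 X3' (f' : Hom X0' X0) (f : Hom X0 X1) (p : NH X1 X2)
      (h : Hom X2 X3) (h' : Hom X3 X3'),
      wh (f' ⋅ f) p (h ⋅ h') = wh f' (wh f p h) h';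
  wh_id : forall X Y (p : NH X Y), wh (idm X) p (idm Y) = p
}.
Arguments NH {C} n _ _.
Arguments bd {C} n {X Y} _.
Arguments wh {C} n {X0 X1 X2 X3} _ _ _.

(* reduced interchange: alpha o g = f o beta, for alpha in Theta(f), beta in Theta(g) *)
Unset Implicit Arguments.
Definition reduced_interchange {C : Category} (T : NHStruct C) : Prop :=
  forall X Y Z (f : Hom X Y) (g : Hom Y Z) (a : NH T X Y) (b : NH T Y Z),
    bd T a = f -> bd T b = g -> wh T (idm X) a g = wh T f b (idm Z).

Set Implicit Arguments.
Record NHMorphism {C D : Category} (TC : NHStruct C) (TD : NHStruct D) := {
  nhF :> Functor C D;
  nhmap : forall X Y, NH TC X Y -> NH TD (nhF X) (nhF Y);
  nhmap_bd : forall X Y (p : NH TC X Y), bd TD (nhmap p) = fmap nhF (bd TC p);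
  nhmap_wh : forall X0 X1 X2 X3 (f : Hom X0 X1) (p : NH TC X1 X2) (h : Hom X2 X3),
      nhmap (wh TC f p h) = wh TD (fmap nhF f) (nhmap p) (fmap nhF h)
}.
Arguments nhF {C D TC TD} _.
Arguments nhmap {C D TC TD} _ {X Y} _.
Unset Implicit Arguments.

Definition two_morphism {C D : Category} {TC : NHStruct C} {TD : NHStruct D}
  (M N : NHMorphism TC TD) (a : forall X, Hom (nhF M X) (nhF N X)) : Prop :=
  natural (nhF M) (nhF N) a /\
  forall X Y (p : NH TC X Y), wh TD (a X) (nhmap N p) (idm _) = wh TD (idm _) (nhmap M p) (a Y).

Definition nh_iso {C D : Category} {TC : NHStruct C} {TD : NHStruct D}
  (M N : NHMorphism TC TD) : Prop :=
  exists (a : forall X, Hom (nhF M X) (nhF N X)) (b : forall X, Hom (nhF N X) (nhF M X)),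
    two_morphism M N a /\ two_morphism N M b /\
    (forall X, a X ⋅ b X = idm _) /\ (forall X, b X ⋅ a X = idm _).

Definition is_cokernel {C : Category} (T : NHStruct C) {X Y : C} (g : Hom X Y)
  (K : C) (c : Hom Y K) (gam : NH T X K) : Prop :=
  bd T gam = g ⋅ c /\
  forall Z (h : Hom Y Z) (p : NH T X Z), bd T p = g ⋅ h ->
    exists! h' : Hom K Z, c ⋅ h' = h /\ wh T (idm X) gam h' = p.

Definition is_strong_cokernel {C : Category} (T : NHStruct C) {X Y : C} (g : Hom X Y)
  (K : C) (c : Hom Y K) (gam : NH T X K) : Prop :=
  is_cokernel T g K c gam /\
  forall Z (h : Hom K Z) (p : NH T Y Z), bd T p = c ⋅ h ->
    wh T g p (idm Z) = wh T (idm X) gam h ->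
    exists! p' : NH T K Z, bd T p' = h /\ wh T c p' (idm Z) = p.

Definition has_strong_cokernel {C : Category} (T : NHStruct C) {X Y : C} (g : Hom X Y) : Prop :=
  exists (K : C) (c : Hom Y K) (gam : NH T X K), is_strong_cokernel T g K c gam.

Definition sends_cokernels_to_strong {C D : Category} {TC : NHStruct C} {TD : NHStruct D}
  (M : NHMorphism TC TD) : Prop :=
  forall X Y (g : Hom X Y) K (c : Hom Y K) (gam : NH TC X K),
    is_cokernel TC g K c gam ->
    is_strong_cokernel TD (fmap (nhF M) g) (nhF M K) (fmap (nhF M) c) (nhmap M gam).

Definition finite_cat (D : Category) : Prop :=
  (exists l : list (Ob D), forall d, In d l) /\
  (forall d d' : D, exists l : list (Hom d d'), forall g, In g l).

Definition is_cocone {D C : Category} (H : Functor D C) (X : C) (i : forall d, Hom (H d) X) :=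
  forall d d' (g : Hom d d'), fmap H g ⋅ i d' = i d.

Definition is_colimit {D C : Category} (H : Functor D C) (X : C) (i : forall d, Hom (H d) X) :=
  is_cocone H X i /\
  forall Y (t : forall d, Hom (H d) Y), is_cocone H Y t ->
    exists! u : Hom X Y, forall d, i d ⋅ u = t d.

Definition is_strong_colimit {D C : Category} (T : NHStruct C) (H : Functor D C) (X : C)
  (i : forall d, Hom (H d) X) : Prop :=
  forall Y (ta : forall d, Hom (H d) Y) (tn : forall d, NH T (H d) Y),
    (forall d, bd T (tn d) = ta d) ->
    (forall d d' (g : Hom d d'), fmap H g ⋅ ta d' = ta d) ->
    (forall d d' (g : Hom d d'), wh T (fmap H g) (tn d') (idm Y) = tn d) ->
    forall u : Hom X Y, (forall d, i d ⋅ u = ta d) ->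
      exists! un : NH T X Y, bd T un = u /\ forall d, wh T (i d) un (idm Y) = tn d.

Definition has_finite_colimits (C : Category) : Prop :=
  forall D : Category, finite_cat D -> forall H : Functor D C,
    exists (X : C) (i : forall d, Hom (H d) X), is_colimit H X i.

Definition preserves_finite_colimits_strong {C E : Category} (F : Functor C E)
  (T : NHStruct E) : Prop :=
  forall D : Category, finite_cat D -> forall (H : Functor D C) (X : C)
    (i : forall d, Hom (H d) X), is_colimit H X i ->
    is_colimit (fcomp H F) (F X) (fun d => fmap F (i d)) /\
    is_strong_colimit T (fcomp H F) (F X) (fun d => fmap F (i d)).

Record ArrOb (A : Category) := { a_src : Ob A; a_tgt : Ob A; a_arr : Hom a_src a_tgt }.
Arguments a_src {A}. Arguments a_tgt {A}. Arguments a_arr {A}.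

Record ArrHom {A : Category} (X Y : ArrOb A) := {
  ah_top : Hom (a_src X) (a_src Y);
  ah_bot : Hom (a_tgt X) (a_tgt Y);
  ah_sq : a_arr X ⋅ ah_bot = ah_top ⋅ a_arr Y }.
Arguments ah_top {A X Y}. Arguments ah_bot {A X Y}. Arguments ah_sq {A X Y}.

Lemma ArrHom_eq {A : Category} (X Y : ArrOb A) (u v : ArrHom X Y) :
  ah_top u = ah_top v -> ah_bot u = ah_bot v -> u = v.
Proof.
  destruct u as [t1 b1 s1], v as [t2 b2 s2]; simpl; intros -> ->.
  f_equal; apply proof_irrelevance.
Qed.

Program Definition arr_id {A : Category} (X : ArrOb A) : ArrHom X X :=
  {| ah_top := idm _; ah_bot := idm _ |}.
Next Obligation. rewrite comp_id_l, comp_id_r; reflexivity. Qed.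

Program Definition arr_comp {A : Category} (X Y Z : ArrOb A) (u : ArrHom X Y) (v : ArrHom Y Z)
  : ArrHom X Z := {| ah_top := ah_top u ⋅ ah_top v; ah_bot := ah_bot u ⋅ ah_bot v |}.
Next Obligation.
  rewrite <- comp_assoc, (ah_sq u), comp_assoc, (ah_sq v), comp_assoc; reflexivity.
Qed.

Program Definition Arr (A : Category) : Category :=
  {| Ob := ArrOb A; Hom := @ArrHom A; idm := @arr_id A; comp := @arr_comp A |}.
Next Obligation. apply ArrHom_eq; simpl; apply comp_id_l. Qed.
Next Obligation. apply ArrHom_eq; simpl; apply comp_id_r. Qed.
Next Obligation. apply ArrHom_eq; simpl; apply comp_assoc. Qed.

(* Theta_Delta(g,g0) = { phi : B0 -> C | b.phi = g, phi.c = g0 };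
   a nullhomotopy between X and Y is phi : tgt X -> src Y, with boundary (b.phi, phi.c). *)
Program Definition arr_bd {A : Category} (X Y : ArrOb A) (p : Hom (a_tgt X) (a_src Y))
  : ArrHom X Y := {| ah_top := a_arr X ⋅ p; ah_bot := p ⋅ a_arr Y |}.
Next Obligation. rewrite comp_assoc; reflexivity. Qed.

Program Definition ThetaDelta (A : Category) : NHStruct (Arr A) :=
  {| NH := fun X Y => Hom (a_tgt X) (a_src Y);
     bd := @arr_bd A;
     wh := fun X0 X1 X2 X3 f p h => ah_bot f ⋅ p ⋅ ah_top h |}.
Next Obligation.
  apply ArrHom_eq; simpl.
  - rewrite <- !comp_assoc, (ah_sq f); reflexivity.
  - rewrite !comp_assoc, (ah_sq h); reflexivity.
Qed.
Next Obligation. rewrite !comp_assoc; reflexivity. Qed.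
Next Obligation. rewrite comp_id_l, comp_id_r; reflexivity. Qed.

Definition is_initial {A : Category} (I0 : A) (init : forall X, Hom I0 X) : Prop :=
  forall X (f : Hom I0 X), f = init X.

Program Definition GammaF (A : Category) (I0 : A) (init : forall X : A, Hom I0 X)
  (Hinit : is_initial I0 init) : Functor A (Arr A) :=
  {| fob := fun X => {| a_src := I0; a_tgt := X; a_arr := init X |};
     fmap := fun X Y g0 => {| ah_top := idm I0; ah_bot := g0 |} |}.
Next Obligation. rewrite comp_id_l; rewrite (Hinit _ (init X ⋅ g0)); reflexivity. Qed.
Next Obligation. apply ArrHom_eq; reflexivity. Qed.
Next Obligation. apply ArrHom_eq; simpl; [rewrite comp_id_l|]; reflexivity. Qed.

(* Main.v *)
Require Import Defs.
From Stdlib Require Import IndefiniteDescription ProofIrrelevance List.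
Set Implicit Arguments.
Unset Strict Implicit.

Lemma whwh {C : Category} (T : NHStruct C) X0' X0 X1 X2 X3 X3' (f' : Hom X0' X0) (f : Hom X0 X1)
  (p : NH T X1 X2) (h : Hom X2 X3) (h' : Hom X3 X3') :
  wh T f' (wh T f p h) h' = wh T (f' ⋅ f) p (h ⋅ h').
Proof. symmetry; apply wh_comp. Qed.

Ltac nrm := repeat (rewrite ?whwh, ?comp_id_l, ?comp_id_r, ?comp_assoc, ?wh_id).

Definition choose {T : Type} (P : T -> Prop) (H : exists x, P x) : {x | P x} :=
  constructive_indefinite_description P H.

Lemma uex {T : Type} (P : T -> Prop) : (exists! x, P x) -> exists x, P x.
Proof. intros [x [Hx _]]; eauto. Qed.

Section Cok.
Variables (C : Category) (T : NHStruct C) (X Y K : C) (g : Hom X Y) (c : Hom Y K) (gam : NH T X K).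

Lemma cok_bd : is_cokernel T g K c gam -> bd T gam = g ⋅ c.
Proof. intros [H _]; exact H. Qed.

Lemma cok_uniq : is_cokernel T g K c gam -> forall Z (h1 h2 : Hom K Z),
  c ⋅ h1 = c ⋅ h2 -> wh T (idm X) gam h1 = wh T (idm X) gam h2 -> h1 = h2.
Proof.
  intros [Hb Hu] Z h1 h2 E1 E2.
  destruct (Hu Z (c ⋅ h2) (wh T (idm X) gam h2)) as [h' [_ Hh']].
  - rewrite bd_wh, Hb, comp_id_l, comp_assoc; reflexivity.
  - rewrite <- (Hh' h1), <- (Hh' h2); auto.
Qed.

Definition cok_map (H : is_cokernel T g K c gam) Z (h : Hom Y Z) (p : NH T X Z)
  (Hp : bd T p = g ⋅ h) : {h' : Hom K Z | c ⋅ h' = h /\ wh T (idm X) gam h' = p} :=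
  choose (uex (proj2 H Z h p Hp)).

Lemma scok_cok : is_strong_cokernel T g K c gam -> is_cokernel T g K c gam.
Proof. intros [H _]; exact H. Qed.

Definition scok_nh (H : is_strong_cokernel T g K c gam) Z (h : Hom K Z) (p : NH T Y Z)
  (Hp : bd T p = c ⋅ h) (Hq : wh T g p (idm Z) = wh T (idm X) gam h) :
  {p' : NH T K Z | bd T p' = h /\ wh T c p' (idm Z) = p} :=
  choose (uex (proj2 H Z h p Hp Hq)).

Lemma scok_uniq : reduced_interchange T -> is_strong_cokernel T g K c gam ->
  forall Z (h : Hom K Z) (p1 p2 : NH T K Z), bd T p1 = h -> bd T p2 = h ->
  wh T c p1 (idm Z) = wh T c p2 (idm Z) -> p1 = p2.
Proof.
  intros RI [Hc Hs] Z h p1 p2 B1 B2 E.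
  destruct (Hs Z h (wh T c p1 (idm Z))) as [p' [_ Hp']].
  - rewrite bd_wh, B1, comp_id_r; reflexivity.
  - rewrite whwh, comp_id_l.
    symmetry; apply RI; auto. apply (cok_bd Hc).
  - rewrite <- (Hp' p1), <- (Hp' p2); auto.
Qed.
End Cok.

Section Colim.
Variables (D C : Category) (T : NHStruct C) (H : Functor D C) (X : C) (i : forall d, Hom (H d) X).

Lemma colim_uniq : is_colimit H X i -> forall Y (u1 u2 : Hom X Y),
  (forall d, i d ⋅ u1 = i d ⋅ u2) -> u1 = u2.
Proof.
  intros [Hc Hu] Y u1 u2 E.
  destruct (Hu Y (fun d => i d ⋅ u2)) as [u [_ Hu']].
  - intros d d' f. rewrite <- comp_assoc, Hc; reflexivity.
  - rewrite <- (Hu' u1), <- (Hu' u2); auto.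
Qed.

Definition colim_map (Hc : is_colimit H X i) Y (t : forall d, Hom (H d) Y) (Ht : is_cocone H Y t) :
  {u : Hom X Y | forall d, i d ⋅ u = t d} := choose (uex (proj2 Hc Y t Ht)).

Lemma scolim_uniq : is_colimit H X i -> is_strong_colimit T H X i -> forall Y (n1 n2 : NH T X Y),
  bd T n1 = bd T n2 -> (forall d, wh T (i d) n1 (idm Y) = wh T (i d) n2 (idm Y)) -> n1 = n2.
Proof.
  intros [Hc _] Hs Y n1 n2 B E.
  destruct (Hs Y (fun d => i d ⋅ bd T n1) (fun d => wh T (i d) n1 (idm Y))) with (u := bd T n1)
    as [un [_ Hun]]; auto.
  - intros d; rewrite bd_wh, comp_id_r; reflexivity.
  - intros d d' f; rewrite <- comp_assoc, Hc; reflexivity.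
  - intros d d' f; rewrite whwh, comp_id_l, Hc; reflexivity.
  - rewrite <- (Hun n1), <- (Hun n2); auto.
Qed.

Definition scolim_nh (Hs : is_strong_colimit T H X i) Y (ta : forall d, Hom (H d) Y)
  (tn : forall d, NH T (H d) Y) (H1 : forall d, bd T (tn d) = ta d)
  (H2 : forall d d' (g : Hom d d'), fmap H g ⋅ ta d' = ta d)
  (H3 : forall d d' (g : Hom d d'), wh T (fmap H g) (tn d') (idm Y) = tn d)
  (u : Hom X Y) (Hu : forall d, i d ⋅ u = ta d) :
  {un : NH T X Y | bd T un = u /\ forall d, wh T (i d) un (idm Y) = tn d} :=
  choose (uex (Hs Y ta tn H1 H2 H3 u Hu)).

Lemma colim_transport : is_colimit H X i -> forall X' (e : Hom X X') (f : Hom X' X)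
  (i' : forall d, Hom (H d) X'), e ⋅ f = idm X -> f ⋅ e = idm X' -> (forall d, i d ⋅ e = i' d) ->
  is_colimit H X' i'.
Proof.
  intros [Hc Hu] X' e f i' E1 E2 Ei. split.
  - intros d d' g. rewrite <- !Ei, <- comp_assoc, Hc; reflexivity.
  - intros Y t Ht. destruct (Hu Y t Ht) as [u [Hu1 Hu2]].
    exists (f ⋅ u). split.
    + intros d. rewrite <- Ei, comp_assoc, <- (comp_assoc e), E1, comp_id_l; auto.
    + intros v Hv. rewrite (Hu2 (e ⋅ v)).
      * rewrite <- comp_assoc, E2, comp_id_l; reflexivity.
      * intros d; rewrite <- comp_assoc, Ei; auto.
Qed.
End Colim.

Inductive S3 := s0 | s1 | s2.
Definition sle (a b : S3) : bool :=
  match a, b with s0, _ => true | s1, s1 => true | s2, s2 => true | _, _ => false end.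
Lemma sle_refl a : sle a a = true. Proof. destruct a; reflexivity. Qed.
Lemma sle_trans a b c : sle a b = true -> sle b c = true -> sle a c = true.
Proof. destruct a, b, c; simpl; auto. Qed.

Program Definition SpanC : Category :=
  {| Ob := S3; Hom := fun a b => sle a b = true; idm := sle_refl; comp := sle_trans |}.
Next Obligation. apply proof_irrelevance. Qed.
Next Obligation. apply proof_irrelevance. Qed.
Next Obligation. apply proof_irrelevance. Qed.

Lemma SpanC_finite : finite_cat SpanC.
Proof.
  split.
  - exists (s0 :: s1 :: s2 :: nil). intros d; destruct d; simpl; auto.
  - intros d d'. simpl.
    exists (match sle d d' as b return list (b = true) with true => eq_refl :: nil | false => nil end).
    destruct (sle d d'); intros g.
    + left; apply proof_irrelevance.
    + discriminate.
Qed.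

Section Span.
Variables (A : Category) (X1 X0 Y1 : A) (x : Hom X1 X0) (g : Hom X1 Y1).
Definition spf_ob (s : S3) : A := match s with s0 => X1 | s1 => X0 | s2 => Y1 end.
Definition spf_map (a b : S3) : sle a b = true -> Hom (spf_ob a) (spf_ob b) :=
  match a as a', b as b' return sle a' b' = true -> Hom (spf_ob a') (spf_ob b') with
  | s0, s0 => fun _ => idm _
  | s0, s1 => fun _ => x
  | s0, s2 => fun _ => g
  | s1, s1 => fun _ => idm _
  | s2, s2 => fun _ => idm _
  | s1, s0 => fun e => False_rect _ (Bool.diff_false_true e)
  | s1, s2 => fun e => False_rect _ (Bool.diff_false_true e)
  | s2, s0 => fun e => False_rect _ (Bool.diff_false_true e)
  | s2, s1 => fun e => False_rect _ (Bool.diff_false_true e)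
  end.
Program Definition SpanF : Functor SpanC A := {| fob := spf_ob; fmap := spf_map |}.
Next Obligation. destruct X; reflexivity. Qed.
Next Obligation.
  destruct X, Y, Z; simpl in *; try discriminate; simpl; rewrite ?comp_id_l, ?comp_id_r; reflexivity.
Qed.

Definition is_pushout (P : A) (u : Hom X0 P) (v : Hom Y1 P) : Prop :=
  x ⋅ u = g ⋅ v /\ forall W (a : Hom X0 W) (b : Hom Y1 W), x ⋅ a = g ⋅ b ->
    exists! w : Hom P W, u ⋅ w = a /\ v ⋅ w = b.

Definition spleg {P : A} (u : Hom X0 P) (v : Hom Y1 P) (s : S3) : Hom (spf_ob s) P :=
  match s as s' return Hom (spf_ob s') P with s0 => x ⋅ u | s1 => u | s2 => v end.

Lemma spleg_cocone P (u : Hom X0 P) (v : Hom Y1 P) : x ⋅ u = g ⋅ v -> is_cocone SpanF P (spleg u v).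
Proof.
  intros E d d' e; destruct d, d'; simpl in *; try discriminate; simpl;
    rewrite ?comp_id_l; auto.
Qed.

Lemma pushout_colimit P u v : is_pushout u v -> is_colimit SpanF P (spleg u v).
Proof.
  intros [E Hu]. split; [apply spleg_cocone; auto|].
  intros W t Ht.
  assert (E1 : x ⋅ t s1 = g ⋅ t s2).
  { pose proof (Ht s0 s1 eq_refl) as H1; pose proof (Ht s0 s2 eq_refl) as H2; simpl in H1, H2; rewrite H1, H2; reflexivity. }
  destruct (Hu W (t s1) (t s2) E1) as [w [[W1 W2] Hw]].
  exists w; split.
  - intros d; destruct d; simpl; auto. rewrite comp_assoc, W1. apply (Ht s0 s1 eq_refl).
  - intros w' Hw'. apply Hw. split; [apply (Hw' s1)|apply (Hw' s2)].
Qed.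

Lemma colimit_pushout P (i : forall s, Hom (SpanF s) P) : is_colimit SpanF P i ->
  is_pushout (i s1) (i s2).
Proof.
  intros Hc. pose proof (proj1 Hc) as Hco.
  pose proof (Hco s0 s1 eq_refl) as H1; pose proof (Hco s0 s2 eq_refl) as H2; simpl in H1, H2.
  split.
  - rewrite H1, H2; reflexivity.
  - intros W a b E.
    destruct (proj2 Hc W (spleg a b) (spleg_cocone E)) as [w [Hw1 Hw2]].
    exists w. split.
    + split; [apply (Hw1 s1)|apply (Hw1 s2)].
    + intros w' [W1 W2]. apply Hw2. intros d; destruct d; simpl; auto.
      rewrite <- W1, <- comp_assoc, H1; reflexivity.
Qed.

Lemma pushout_transport P u v : is_pushout u v -> forall P' (e : Hom P P') (f : Hom P' P),
  e ⋅ f = idm P -> f ⋅ e = idm P' -> is_pushout (u ⋅ e) (v ⋅ e).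
Proof.
  intros H P' e f E1 E2.
  assert (HC : is_colimit SpanF P' (spleg (u ⋅ e) (v ⋅ e))).
  { apply (colim_transport (pushout_colimit H) E1 E2).
    intros d; destruct d; simpl; rewrite ?comp_assoc; reflexivity. }
  exact (colimit_pushout HC).
Qed.
End Span.

Program Definition EmptyC : Category :=
  {| Ob := Empty_set; Hom := fun _ _ => unit; idm := fun _ => tt; comp := fun _ _ _ _ _ => tt |}.
Next Obligation. destruct f; reflexivity. Qed.
Next Obligation. destruct f; reflexivity. Qed.

Lemma EmptyC_finite : finite_cat EmptyC.
Proof. split; [exists nil; intros []|intros []]. Qed.

Program Definition EmptyF (A : Category) : Functor EmptyC A :=
  {| fob := fun e => match e with end; fmap := fun e _ _ => match e with end |}.
Next Obligation. destruct X. Qed.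
Next Obligation. destruct X. Qed.

Lemma assoc_rw {C : Category} {W X Y Z : C} (a : Hom W X) (b : Hom X Z) (c : Hom W Y) (d : Hom Y Z) :
  a ⋅ b = c ⋅ d -> forall V (k : Hom Z V), a ⋅ (b ⋅ k) = c ⋅ (d ⋅ k).
Proof. intros E V k; rewrite <- !comp_assoc, E; reflexivity. Qed.

Lemma whLL {C : Category} (T : NHStruct C) X0 X1 X2 X3 Z (f : Hom X0 X1) (f' : Hom X1 X2) (p : NH T X2 X3) (h : Hom X3 Z) :
  wh T (f ⋅ f') p h = wh T f (wh T f' p h) (idm Z).
Proof. rewrite whwh, comp_id_r; reflexivity. Qed.

Section Main.
Variables (A B : Category) (T : NHStruct B) (HRI : reduced_interchange T) (F : Functor A B)
  (Ha : preserves_finite_colimits_strong F T).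

Section FPO.
Variables (X1 X0 Y1 P : A) (x : Hom X1 X0) (g : Hom X1 Y1) (u : Hom X0 P) (v : Hom Y1 P)
  (HP : is_pushout x g u v).

Lemma FPO_full : is_colimit (fcomp (SpanF x g) F) (F P) (fun d => fmap F (spleg x u v d)) /\
  is_strong_colimit T (fcomp (SpanF x g) F) (F P) (fun d => fmap F (spleg x u v d)).
Proof. exact (Ha SpanC_finite (pushout_colimit HP)). Qed.

Lemma FPO_nh_uniq Z (n1 n2 : NH T (F P) Z) : bd T n1 = bd T n2 ->
  wh T (fmap F u) n1 (idm Z) = wh T (fmap F u) n2 (idm Z) ->
  wh T (fmap F v) n1 (idm Z) = wh T (fmap F v) n2 (idm Z) -> n1 = n2.
Proof.
  intros E0 E1 E2.
  apply (scolim_uniq (proj1 FPO_full) (proj2 FPO_full)); auto.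
  intros d; destruct d; simpl; auto.
  rewrite fmap_comp, !whLL, E1; reflexivity.
Qed.

Lemma FPO_nh Z (w : Hom (F P) Z) (qa : NH T (F X0) Z) (qb : NH T (F Y1) Z)
  (Ea : bd T qa = fmap F u ⋅ w) (Eb : bd T qb = fmap F v ⋅ w)
  (Ec : wh T (fmap F x) qa (idm Z) = wh T (fmap F g) qb (idm Z)) :
  {n : NH T (F P) Z | bd T n = w /\ wh T (fmap F u) n (idm Z) = qa /\ wh T (fmap F v) n (idm Z) = qb}.
Proof.
  pose proof (proj1 HP) as Hxg.
  destruct (scolim_nh (proj2 FPO_full) (ta := fun d => fmap F (spleg x u v d) ⋅ w)
    (tn := fun d => match d as d' return NH T (F (spf_ob X1 X0 Y1 d')) Z with
                    s0 => wh T (fmap F x) qa (idm Z) | s1 => qa | s2 => qb end)) with (u := w)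
    as [n [Hn1 Hn2]].
  - intros d; destruct d; simpl; auto. rewrite bd_wh, Ea, fmap_comp; nrm; reflexivity.
  - intros d d' e; destruct d, d'; simpl in *; try discriminate; simpl;
      rewrite ?fmap_id, ?comp_id_l, <- ?comp_assoc, <- ?fmap_comp; auto.
    rewrite Hxg; reflexivity.
  - intros d d' e; destruct d, d'; simpl in *; try discriminate; simpl;
      rewrite ?fmap_id, ?wh_id; auto.
  - intros d; reflexivity.
  - exists n; split; auto. split; [apply (Hn2 s1)|apply (Hn2 s2)].
Qed.
End FPO.

Section Init.
Variables (I0 : A) (init : forall X : A, Hom I0 X) (Hinit : is_initial I0 init).

Definition emptyfam (X : A) : forall d : EmptyC, Hom (EmptyF A d) X :=
  fun d => match d as d' return Hom (EmptyF A d') X with end.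

Lemma I0_colim : is_colimit (EmptyF A) I0 (emptyfam I0).
Proof.
  split; [intros []|]. intros Y t _. exists (init Y). split; [intros []|].
  intros u _; symmetry; apply Hinit.
Qed.

Lemma FI0_full : is_colimit (fcomp (EmptyF A) F) (F I0) (fun d => fmap F (emptyfam I0 d)) /\
  is_strong_colimit T (fcomp (EmptyF A) F) (F I0) (fun d => fmap F (emptyfam I0 d)).
Proof. exact (Ha EmptyC_finite I0_colim). Qed.

Lemma FI0_map_uniq Y (u1 u2 : Hom (F I0) Y) : u1 = u2.
Proof. apply (colim_uniq (proj1 FI0_full)); intros []. Qed.

Lemma FI0_nh_uniq Y (n1 n2 : NH T (F I0) Y) : n1 = n2.
Proof. apply (scolim_uniq (proj1 FI0_full) (proj2 FI0_full)); [apply FI0_map_uniq| intros []]. Qed.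

Lemma FI0_nh Y (u : Hom (F I0) Y) : {n : NH T (F I0) Y | bd T n = u}.
Proof.
  destruct (scolim_nh (proj2 FI0_full) (ta := fun d : EmptyC => match d return Hom (fcomp (EmptyF A) F d) Y with end)
    (tn := fun d : EmptyC => match d return NH T (fcomp (EmptyF A) F d) Y with end)) with (u := u) as [n [Hn _]];
    try (intros []); eauto.
Qed.
End Init.

Variable (Hb : forall (X Y : A) (a : Hom X Y), has_strong_cokernel T (fmap F a)).

Definition cid {T0 : Type} {P0 : T0 -> Prop} (H : exists x, P0 x) : {x | P0 x} :=
  constructive_indefinite_description P0 H.

Lemma ckd (X : ArrOb A) : {K : B & {c : Hom (F (a_tgt X)) K & {gam : NH T (F (a_src X)) K |
   is_strong_cokernel T (fmap F (a_arr X)) K c gam}}}.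
Proof.
  destruct (cid (Hb (a_arr X))) as [K HK]. exists K.
  destruct (cid HK) as [c Hc]. exists c.
  destruct (cid Hc) as [gam Hg]. exists gam; exact Hg.
Qed.

Definition FK (X : ArrOb A) : B := projT1 (ckd X).
Definition Fc (X : ArrOb A) : Hom (F (a_tgt X)) (FK X) := projT1 (projT2 (ckd X)).
Definition Fg (X : ArrOb A) : NH T (F (a_src X)) (FK X) := proj1_sig (projT2 (projT2 (ckd X))).
Definition FS (X : ArrOb A) : is_strong_cokernel T (fmap F (a_arr X)) (FK X) (Fc X) (Fg X) :=
  proj2_sig (projT2 (projT2 (ckd X))).
Definition FC (X : ArrOb A) := scok_cok (FS X).

Lemma Fg_bd X : bd T (Fg X) = fmap F (a_arr X) ⋅ Fc X.
Proof. exact (cok_bd (FC X)). Qed.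

Lemma Fmap_data {X Y : ArrOb A} (u : ArrHom X Y) : {h : Hom (FK X) (FK Y) |
  Fc X ⋅ h = fmap F (ah_bot u) ⋅ Fc Y /\
  wh T (idm _) (Fg X) h = wh T (fmap F (ah_top u)) (Fg Y) (idm _)}.
Proof.
  apply (cok_map (FC X)).
  rewrite bd_wh, Fg_bd, comp_id_r, <- !comp_assoc, <- !fmap_comp, ah_sq; reflexivity.
Qed.

Definition Fmap {X Y : ArrOb A} (u : ArrHom X Y) : Hom (FK X) (FK Y) := proj1_sig (Fmap_data u).
Lemma Fmap_c {X Y} (u : ArrHom X Y) : Fc X ⋅ Fmap u = fmap F (ah_bot u) ⋅ Fc Y.
Proof. exact (proj1 (proj2_sig (Fmap_data u))). Qed.
Lemma Fmap_g {X Y} (u : ArrHom X Y) : wh T (idm _) (Fg X) (Fmap u) = wh T (fmap F (ah_top u)) (Fg Y) (idm _).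
Proof. exact (proj2 (proj2_sig (Fmap_data u))). Qed.
Lemma Fmap_g' {X Y} (u : ArrHom X Y) W Z (f : Hom W (F (a_src X))) (k : Hom (FK Y) Z) :
  wh T f (Fg X) (Fmap u ⋅ k) = wh T (f ⋅ fmap F (ah_top u)) (Fg Y) k.
Proof.
  rewrite <- (comp_id_r f) at 1. rewrite <- (comp_id_r (fmap F (ah_top u))).
  rewrite <- !whwh, Fmap_g, !whwh; nrm; reflexivity.
Qed.
Lemma Fmap_g0 {X Y} (u : ArrHom X Y) W (f : Hom W (F (a_src X))) :
  wh T f (Fg X) (Fmap u) = wh T (f ⋅ fmap F (ah_top u)) (Fg Y) (idm _).
Proof. rewrite <- (comp_id_r (Fmap u)), Fmap_g'; reflexivity. Qed.

Lemma Fmap_id X : Fmap (arr_id X) = idm (FK X).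
Proof.
  apply (cok_uniq (FC X)).
  - rewrite Fmap_c; simpl; rewrite fmap_id; nrm; reflexivity.
  - rewrite Fmap_g; simpl; rewrite fmap_id; reflexivity.
Qed.

Lemma Fmap_comp X Y Z (u : ArrHom X Y) (v : ArrHom Y Z) : Fmap (arr_comp X Y Z u v) = Fmap u ⋅ Fmap v.
Proof.
  apply (cok_uniq (FC X)).
  - rewrite Fmap_c, (assoc_rw (Fmap_c u)), Fmap_c; simpl; rewrite fmap_comp; nrm; reflexivity.
  - rewrite Fmap_g, Fmap_g', Fmap_g0; simpl; rewrite fmap_comp; nrm; reflexivity.
Qed.

Program Definition FhF : Functor (Arr A) B := {| fob := FK; fmap := fun X Y u => Fmap u |}.
Next Obligation. apply Fmap_id. Qed.
Next Obligation. apply Fmap_comp. Qed.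

Lemma Fnh_data {X Y : ArrOb A} (p : Hom (a_tgt X) (a_src Y)) : {p' : NH T (FK X) (FK Y) |
  bd T p' = Fmap (arr_bd X Y p) /\ wh T (Fc X) p' (idm _) = wh T (fmap F p) (Fg Y) (idm _)}.
Proof.
  apply (scok_nh (FS X)).
  - rewrite bd_wh, Fg_bd, Fmap_c; simpl; rewrite fmap_comp; nrm; reflexivity.
  - rewrite Fmap_g0, whwh; simpl; rewrite fmap_comp; nrm; reflexivity.
Qed.
Definition Fnh {X Y : ArrOb A} (p : Hom (a_tgt X) (a_src Y)) : NH T (FK X) (FK Y) :=
  proj1_sig (Fnh_data p).
Lemma Fnh_bd {X Y : ArrOb A} (p : Hom (a_tgt X) (a_src Y)) : bd T (Fnh p) = Fmap (arr_bd X Y p).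
Proof. exact (proj1 (proj2_sig (Fnh_data p))). Qed.
Lemma Fnh_c {X Y : ArrOb A} (p : Hom (a_tgt X) (a_src Y)) :
  wh T (Fc X) (Fnh p) (idm _) = wh T (fmap F p) (Fg Y) (idm _).
Proof. exact (proj2 (proj2_sig (Fnh_data p))). Qed.
Lemma Fnh_c' {X Y : ArrOb A} (p : Hom (a_tgt X) (a_src Y)) W Z (f : Hom W (F (a_tgt X))) (k : Hom (FK Y) Z) :
  wh T (f ⋅ Fc X) (Fnh p) k = wh T (f ⋅ fmap F p) (Fg Y) k.
Proof.
  rewrite <- (comp_id_l k), <- whwh, Fnh_c, whwh; nrm; reflexivity.
Qed.

Lemma Fnh_wh X0 X1 X2 X3 (f : ArrHom X0 X1) (p : Hom (a_tgt X1) (a_src X2)) (h : ArrHom X2 X3) :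
  Fnh (ah_bot f ⋅ p ⋅ ah_top h) = wh T (Fmap f) (Fnh p) (Fmap h).
Proof.
  apply (scok_uniq HRI (FS X0)) with (h := Fmap (arr_bd X0 X3 (ah_bot f ⋅ p ⋅ ah_top h))).
  - apply Fnh_bd.
  - rewrite bd_wh, Fnh_bd, <- !Fmap_comp. f_equal. apply ArrHom_eq; simpl.
    + rewrite <- !comp_assoc, (ah_sq f); reflexivity.
    + rewrite !comp_assoc, (ah_sq h); reflexivity.
  - rewrite Fnh_c, whwh, comp_id_r, Fmap_c, Fnh_c', Fmap_g0, !fmap_comp; nrm; reflexivity.
Qed.

Program Definition Fh : NHMorphism (ThetaDelta A) T :=
  {| nhF := FhF; nhmap := fun X Y p => Fnh p |}.
Next Obligation. apply Fnh_bd. Qed.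
Next Obligation. apply Fnh_wh. Qed.

Variables (I0 : A) (init : forall X : A, Hom I0 X) (Hinit : is_initial I0 init).
Notation Γ := (GammaF A I0 init Hinit).

Lemma aG_data (X : A) : {h : Hom (FK (Γ X)) (F X) | Fc (Γ X) ⋅ h = idm _}.
Proof.
  destruct (FI0_nh Hinit (fmap F (init X) ⋅ idm (F X))) as [p Hp].
  destruct (cok_map (FC (Γ X)) (Z := F X) (h := idm (F X)) (p := p) Hp) as [h [H1 _]].
  exists h; exact H1.
Qed.
Definition aG X := proj1_sig (aG_data X).
Lemma aG_c X : Fc (Γ X) ⋅ aG X = idm _.
Proof. exact (proj2_sig (aG_data X)). Qed.

Lemma Gamma_iso : nat_iso (fcomp Γ FhF) F.
Proof.
  exists aG, (fun X => Fc (Γ X)).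
  assert (Nb : natural F (fcomp Γ FhF) (fun X => Fc (Γ X))).
  { intros X Y f. simpl. symmetry; apply (Fmap_c (X := Γ X) (Y := Γ Y)). }
  split; [|split; [exact Nb|split]].
  - intros X Y f. simpl.
    apply (cok_uniq (FC (Γ X))); [|apply (FI0_nh_uniq Hinit)].
    rewrite (assoc_rw (Fmap_c (X := Γ X) (Y := Γ Y) _)). rewrite aG_c, <- comp_assoc, aG_c; simpl; nrm; reflexivity.
  - intros X. apply (cok_uniq (FC (Γ X))); [|apply (FI0_nh_uniq Hinit)].
    rewrite <- comp_assoc, aG_c; nrm; reflexivity.
  - intros X. apply aG_c.
Qed.

Variable (HA : has_finite_colimits A).

Lemma pushout_exists {X1 X0 Y1 : A} (x : Hom X1 X0) (g : Hom X1 Y1) :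
  {P : A & {u : Hom X0 P & {v : Hom Y1 P | is_pushout x g u v}}}.
Proof.
  destruct (cid (HA SpanC_finite (SpanF x g))) as [P HP].
  destruct (cid HP) as [i Hi].
  exists P, (i s1), (i s2). exact (colimit_pushout Hi).
Qed.

Lemma po_map {X1 X0 Y1 P : A} {x : Hom X1 X0} {g : Hom X1 Y1} {u : Hom X0 P} {v : Hom Y1 P}
  (HP : is_pushout x g u v) W (a : Hom X0 W) (b : Hom Y1 W) (E : x ⋅ a = g ⋅ b) :
  {w : Hom P W | u ⋅ w = a /\ v ⋅ w = b}.
Proof. exact (choose (uex (proj2 HP W a b E))). Qed.

Lemma po_uniq {X1 X0 Y1 P : A} {x : Hom X1 X0} {g : Hom X1 Y1} {u : Hom X0 P} {v : Hom Y1 P}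
  (HP : is_pushout x g u v) W (w1 w2 : Hom P W) : u ⋅ w1 = u ⋅ w2 -> v ⋅ w1 = v ⋅ w2 -> w1 = w2.
Proof.
  intros E1 E2. destruct (proj2 HP W (u ⋅ w2) (v ⋅ w2)) as [w [_ Hw]].
  - rewrite <- !comp_assoc, (proj1 HP); reflexivity.
  - rewrite <- (Hw w1), <- (Hw w2); auto.
Qed.

Lemma arr_cok_struct {X Y K : ArrOb A} (g : ArrHom X Y) (c : ArrHom Y K) (gam : Hom (a_tgt X) (a_src K)) :
  is_cokernel (ThetaDelta A) (g : Hom (c:=Arr A) X Y) K c gam ->
  is_pushout (a_arr X) (ah_top g) gam (ah_top c) /\
  exists m0 : Hom (a_tgt K) (a_tgt Y), ah_bot c ⋅ m0 = idm _ /\ m0 ⋅ ah_bot c = idm _.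
Proof.
  intros HK.
  destruct (pushout_exists (a_arr X) (ah_top g)) as [P [u [v HP]]].
  destruct (po_map HP (ah_sq g)) as [k [K1 K2]].
  set (Pc := {| a_src := P; a_tgt := a_tgt Y; a_arr := k |}).
  assert (Sq : a_arr Y ⋅ idm _ = v ⋅ a_arr Pc) by (simpl; rewrite comp_id_r; auto).
  set (cP := @Build_ArrHom A Y Pc v (idm (a_tgt Y)) Sq).
  assert (HPc : is_cokernel (ThetaDelta A) (g : Hom (c:=Arr A) X Y) Pc cP u).
  { split.
    - apply ArrHom_eq; simpl; [apply (proj1 HP)|rewrite comp_id_r; auto].
    - intros Z h p Hp.
      assert (P1 : a_arr X ⋅ p = ah_top g ⋅ ah_top h) by exact (f_equal ah_top Hp).
      assert (P2 : p ⋅ a_arr Z = ah_bot g ⋅ ah_bot h) by exact (f_equal ah_bot Hp).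
      destruct (po_map HP P1) as [w [W1 W2]].
      assert (Sq2 : a_arr Pc ⋅ ah_bot h = w ⋅ a_arr Z).
      { simpl. apply (po_uniq HP).
        - rewrite <- comp_assoc, K1, <- comp_assoc, W1, P2; reflexivity.
        - rewrite <- comp_assoc, K2, <- comp_assoc, W2, ah_sq; reflexivity. }
      exists (@Build_ArrHom A Pc Z w (ah_bot h) Sq2). split.
      + split.
        * apply ArrHom_eq; simpl; [auto|apply comp_id_l].
        * simpl. rewrite comp_id_l; auto.
      + intros h'' [H1 H2]. apply ArrHom_eq; simpl.
        * apply (po_uniq HP).
          -- rewrite W1, <- H2; simpl; rewrite comp_id_l; reflexivity.
          -- rewrite W2, <- H1; reflexivity.
        * rewrite <- H1; simpl; rewrite comp_id_l; reflexivity. }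
  destruct (cok_map HK (Z := Pc) (h := cP) (p := u) (proj1 HPc)) as [m [M1 M2]].
  destruct (cok_map HPc (Z := K) (h := c) (p := gam) (proj1 HK)) as [n [N1 N2]].
  assert (MN : (m ⋅ n : Hom (c:=Arr A) K K) = idm (c:=Arr A) K).
  { apply (cok_uniq HK).
    - rewrite <- comp_assoc, M1, N1, comp_id_r; reflexivity.
    -       rewrite <- (comp_id_l (idm (c:=Arr A) X)) at 1. rewrite wh_comp, M2, N2, wh_id; reflexivity. }
  assert (NM : (n ⋅ m : Hom (c:=Arr A) Pc Pc) = idm (c:=Arr A) Pc).
  { apply (cok_uniq HPc).
    - rewrite <- comp_assoc, N1, M1, comp_id_r; reflexivity.
    -       rewrite <- (comp_id_l (idm (c:=Arr A) X)) at 1. rewrite wh_comp, N2, M2, wh_id; reflexivity. }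
  split.
  - assert (E1 : u ⋅ ah_top n = gam).
    { rewrite <- N2; simpl; rewrite comp_id_l; reflexivity. }
    assert (E2 : v ⋅ ah_top n = ah_top c).
    { rewrite <- N1; reflexivity. }
    rewrite <- E1, <- E2. apply (pushout_transport HP (e := ah_top n) (f := ah_top m)).
    + exact (f_equal ah_top NM).
    + exact (f_equal ah_top MN).
  - exists (ah_bot m). split.
    + exact (f_equal ah_bot M1).
    + assert (E3 : ah_bot n = ah_bot c).
      { rewrite <- N1; simpl; rewrite comp_id_l; reflexivity. }
      rewrite <- E3. exact (f_equal ah_bot MN).
Qed.

Lemma Fnh_c0 {X Y : ArrOb A} (p : Hom (a_tgt X) (a_src Y)) Z (k : Hom (FK Y) Z) :
  wh T (Fc X) (Fnh p) k = wh T (fmap F p) (Fg Y) k.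
Proof. rewrite <- (comp_id_l (Fc X)), Fnh_c', comp_id_l; reflexivity. Qed.

Lemma Fmap_c'' {X Y} (u : ArrHom X Y) W (f : Hom W (F (a_tgt X))) :
  f ⋅ (Fc X ⋅ Fmap u) = f ⋅ (fmap F (ah_bot u) ⋅ Fc Y).
Proof. rewrite Fmap_c; reflexivity. Qed.

Lemma Fmap_cA {X Y} (u : ArrHom X Y) V (k : Hom (FK Y) V) :
  Fc X ⋅ (Fmap u ⋅ k) = fmap F (ah_bot u) ⋅ (Fc Y ⋅ k).
Proof. apply assoc_rw, Fmap_c. Qed.
Lemma whR {C : Category} (T0 : NHStruct C) X0 X1 X2 X3 (f : Hom X0 X1) (p : NH T0 X1 X2) (h : Hom X2 X3) :
  wh T0 f p h = wh T0 f (wh T0 (idm _) p h) (idm _).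
Proof. rewrite whwh, !comp_id_r; reflexivity. Qed.
Ltac rwc := first [rewrite Fmap_c | rewrite Fmap_cA].

Lemma Fmap_g'' {X Y} (u : ArrHom X Y) Z (k : Hom (FK Y) Z) :
  wh T (idm _) (Fg X) (Fmap u ⋅ k) = wh T (fmap F (ah_top u)) (Fg Y) k.
Proof. rewrite Fmap_g', comp_id_l; reflexivity. Qed.

Lemma Fh_cok {X Y K : ArrOb A} (g : ArrHom X Y) (c : ArrHom Y K) (gam : Hom (a_tgt X) (a_src K))
  (E1 : a_arr X ⋅ gam = ah_top g ⋅ ah_top c) (E2 : gam ⋅ a_arr K = ah_bot g ⋅ ah_bot c)
  (HP : is_pushout (a_arr X) (ah_top g) gam (ah_top c))
  (m0 : Hom (a_tgt K) (a_tgt Y)) (M1 : ah_bot c ⋅ m0 = idm _) (M2 : m0 ⋅ ah_bot c = idm _) :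
  is_strong_cokernel T (Fmap g) (FK K) (Fmap c) (Fnh gam).
Proof.
  assert (G1 : forall Z (z : Hom (F (a_tgt Y)) Z),
    fmap F gam ⋅ (fmap F (a_arr K) ⋅ (fmap F m0 ⋅ z)) = fmap F (ah_bot g) ⋅ z).
  { intros Z z. rewrite <- !comp_assoc, <- !fmap_comp, E2, comp_assoc, M1, comp_id_r; reflexivity. }
  assert (G2 : forall Z (z : Hom (F (a_tgt Y)) Z),
    fmap F (ah_top c) ⋅ (fmap F (a_arr K) ⋅ (fmap F m0 ⋅ z)) = fmap F (a_arr Y) ⋅ z).
  { intros Z z. rewrite <- !comp_assoc, <- !fmap_comp, <- ah_sq, comp_assoc, M1, comp_id_r; reflexivity. }
  assert (G3 : forall Z (z : Hom (F (a_tgt Y)) Z), fmap F (ah_bot c) ⋅ (fmap F m0 ⋅ z) = z).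
  { intros Z z. rewrite <- comp_assoc, <- fmap_comp, M1, fmap_id, comp_id_l; reflexivity. }
  assert (G4 : forall Z (z : Hom (F (a_tgt K)) Z), fmap F m0 ⋅ (fmap F (ah_bot c) ⋅ z) = z).
  { intros Z z. rewrite <- comp_assoc, <- fmap_comp, M2, fmap_id, comp_id_l; reflexivity. }
  assert (Ebd : bd T (Fnh gam) = Fmap g ⋅ Fmap c).
  { rewrite Fnh_bd, <- Fmap_comp. f_equal. apply ArrHom_eq; simpl; auto. }
  split; [split; [exact Ebd|]|].
  -
    intros Z h p Hp.
    set (h0 := fmap F m0 ⋅ (Fc Y ⋅ h)).
    set (q := wh T (Fc X) p (idm Z)).
    set (ph := wh T (idm _) (Fg Y) h).
    assert (Ea : bd T q = fmap F gam ⋅ (fmap F (a_arr K) ⋅ h0)).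
    { unfold q, h0. rewrite G1, bd_wh, Hp; nrm. rwc. reflexivity. }
    assert (Eb : bd T ph = fmap F (ah_top c) ⋅ (fmap F (a_arr K) ⋅ h0)).
    { unfold ph, h0. rewrite G2, bd_wh, Fg_bd; nrm; reflexivity. }
    assert (Ec : wh T (fmap F (a_arr X)) q (idm Z) = wh T (fmap F (ah_top g)) ph (idm Z)).
    { unfold q, ph. nrm. rewrite <- (HRI (Fg_bd X) Hp).
      rewrite Fmap_g''. reflexivity. }
    destruct (FPO_nh HP Ea Eb Ec) as [pp [PP1 [PP2 PP3]]].
    assert (Char : forall h'' : Hom (FK K) Z, Fmap c ⋅ h'' = h -> wh T (idm _) (Fnh gam) h'' = p ->
      Fc K ⋅ h'' = h0 /\ wh T (idm _) (Fg K) h'' = pp).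
    { intros h'' C1 C2.
      assert (C3 : Fc K ⋅ h'' = h0).
      { unfold h0. rewrite <- C1. rwc. rewrite G4; reflexivity. }
      split; [exact C3|].
      apply (FPO_nh_uniq HP).
      - rewrite PP1, bd_wh, Fg_bd; nrm; rewrite C3; reflexivity.
      - rewrite PP2; unfold q; rewrite <- C2; nrm. rewrite Fnh_c0; reflexivity.
      - rewrite PP3; unfold ph; rewrite <- C1; nrm. rewrite Fmap_g''; reflexivity. }
    destruct (cok_map (FC K) (Z := Z) (h := h0) (p := pp) PP1) as [hh [H1 H2]].
    assert (D1 : Fmap c ⋅ hh = h).
    { apply (cok_uniq (FC Y)).
      - rwc. rewrite H1. unfold h0. rewrite G3; reflexivity.
      - rewrite Fmap_g'', (whR (fmap F (ah_top c)) (Fg K) hh), H2, PP3; reflexivity. }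
    assert (D2 : wh T (idm _) (Fnh gam) hh = p).
    { apply (scok_uniq HRI (FS X)) with (h := Fmap g ⋅ h).
      - rewrite bd_wh, Ebd, comp_id_l, comp_assoc, D1; reflexivity.
      - exact Hp.
      - nrm. rewrite Fnh_c0, (whR (fmap F gam) (Fg K) hh), H2, PP2; reflexivity. }
    exists hh. split; [split; auto|].
    intros h'' [C1 C2]. destruct (Char h'' C1 C2) as [C3 C4].
    apply (cok_uniq (FC K)); [rewrite C3, H1|rewrite C4, H2]; reflexivity.
  -
    intros Z hh p Hp Hq.
    set (r := wh T (fmap F m0 ⋅ Fc Y) p (idm Z)).
    assert (Br : bd T r = Fc K ⋅ hh).
    { unfold r. rewrite bd_wh, Hp; nrm. rwc. rewrite G4; reflexivity. }
    assert (Cr : wh T (fmap F (a_arr K)) r (idm Z) = wh T (idm _) (Fg K) hh).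
    { apply (FPO_nh_uniq HP).
      - rewrite !bd_wh, Br, Fg_bd; nrm; reflexivity.
      - unfold r; nrm. rewrite G1, <- (Fmap_c g), whLL, Hq. nrm. rewrite Fnh_c0; reflexivity.
      - unfold r; nrm. rewrite G2.
        rewrite <- (HRI (Fg_bd Y) Hp), Fmap_g''; reflexivity. }
    destruct (scok_nh (FS K) Br Cr) as [p' [P1 P2]].
    assert (Q1 : wh T (Fmap c) p' (idm Z) = p).
    { apply (scok_uniq HRI (FS Y)) with (h := Fmap c ⋅ hh).
      - rewrite bd_wh, P1, comp_id_r; reflexivity.
      - exact Hp.
      - nrm. rwc. rewrite <- (comp_id_r (idm Z)), <- whwh, P2. unfold r. nrm.
        rewrite G3; reflexivity. }
    exists p'. split; [split; auto|].
    intros p1 [B1 B2].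
    apply (scok_uniq HRI (FS K)) with (h := hh); auto.
    rewrite P2. unfold r. rewrite <- B2. nrm. rwc. rewrite G4; reflexivity.
Qed.

Lemma Fh_sends : sends_cokernels_to_strong Fh.
Proof.
  intros X Y g K c gam HK.
  destruct (arr_cok_struct HK) as [HP [m0 [M1 M2]]].
  pose proof (cok_bd HK) as E.
  exact (Fh_cok (g:=g) (c:=c) (gam:=gam) (f_equal ah_top E) (f_equal ah_bot E) HP M1 M2).
Qed.

Program Definition SrcF : Functor (Arr A) A := {| fob := a_src; fmap := fun X Y u => ah_top u |}.
Program Definition TgtF : Functor (Arr A) A := {| fob := a_tgt; fmap := fun X Y u => ah_bot u |}.

Lemma arr_colim_pointwise (D : Category) (HD : finite_cat D) (H : Functor D (Arr A)) (X : ArrOb A)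
  (i : forall d, Hom (H d) X) : is_colimit H X i ->
  is_colimit (fcomp H SrcF) (a_src X) (fun d => ah_top (i d)) /\
  is_colimit (fcomp H TgtF) (a_tgt X) (fun d => ah_bot (i d)).
Proof.
  intros Hi.
  destruct (cid (HA HD (fcomp H SrcF))) as [P1 HP1]; destruct (cid HP1) as [j1 Hj1].
  destruct (cid (HA HD (fcomp H TgtF))) as [P0 HP0]; destruct (cid HP0) as [j0 Hj0].
  assert (Cs : is_cocone (fcomp H SrcF) P0 (fun d => a_arr (H d) ⋅ j0 d)).
  { intros d d' e. simpl. rewrite <- comp_assoc, <- (ah_sq (fmap H e)), comp_assoc.
    f_equal. apply (proj1 Hj0 d d' e). }
  destruct (colim_map Hj1 Cs) as [p Hp].
  simpl in Hp.
  set (Pc := {| a_src := P1; a_tgt := P0; a_arr := p |}).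
  set (jc := fun d => @Build_ArrHom A (H d) Pc (j1 d) (j0 d) (eq_sym (Hp d))).
  assert (Cjc : is_cocone H Pc jc).
  { intros d d' e. apply ArrHom_eq; simpl.
    - apply (proj1 Hj1 d d' e).
    - apply (proj1 Hj0 d d' e). }
  destruct (colim_map Hi Cjc) as [m Hm].
  assert (Ct : is_cocone (fcomp H SrcF) (a_src X) (fun d => ah_top (i d))).
  { intros d d' e. exact (f_equal ah_top (proj1 Hi d d' e)). }
  assert (Cb : is_cocone (fcomp H TgtF) (a_tgt X) (fun d => ah_bot (i d))).
  { intros d d' e. exact (f_equal ah_bot (proj1 Hi d d' e)). }
  destruct (colim_map Hj1 Ct) as [n1 Hn1].
  destruct (colim_map Hj0 Cb) as [n0 Hn0].
  simpl in Hn1, Hn0.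
  assert (Sq : p ⋅ n0 = n1 ⋅ a_arr X).
  { apply (colim_uniq Hj1). intros d. simpl.
    rewrite <- comp_assoc, Hp, comp_assoc, (Hn0 d), <- comp_assoc, (Hn1 d), ah_sq; reflexivity. }
  set (n := @Build_ArrHom A Pc X n1 n0 Sq).
  assert (MN : (m ⋅ n : Hom (c:=Arr A) X X) = idm (c:=Arr A) X).
  { apply (colim_uniq Hi). intros d. rewrite <- comp_assoc, Hm, comp_id_r.
    apply ArrHom_eq; simpl; auto. }
  split.
  - apply (colim_transport Hj1 (e := n1) (f := ah_top m)); auto.
    + apply (colim_uniq Hj1). intros d. simpl. rewrite <- comp_assoc, Hn1, comp_id_r.
      exact (f_equal ah_top (Hm d)).
    + exact (f_equal ah_top MN).
  - apply (colim_transport Hj0 (e := n0) (f := ah_bot m)); auto.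
    + apply (colim_uniq Hj0). intros d. simpl. rewrite <- comp_assoc, Hn0, comp_id_r.
      exact (f_equal ah_bot (Hm d)).
    + exact (f_equal ah_bot MN).
Qed.

Lemma Fh_pres : preserves_finite_colimits_strong FhF T.
Proof.
  intros D HD H X i Hi.
  destruct (arr_colim_pointwise HD Hi) as [P1 P0].
  destruct (Ha HD P1) as [C1c C1s]. destruct (Ha HD P0) as [C0c C0s].
  assert (Hco : forall d d' (e : Hom d d'), Fmap (fmap H e) ⋅ Fmap (i d') = Fmap (i d)).
  { intros d d' e. rewrite <- Fmap_comp. f_equal. apply (proj1 Hi d d' e). }
  assert (Fsq : forall d, fmap F (ah_top (i d)) ⋅ fmap F (a_arr X) =
                          fmap F (a_arr (H d)) ⋅ fmap F (ah_bot (i d))).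
  { intros d. rewrite <- !fmap_comp, ah_sq; reflexivity. }
  assert (FsqH : forall d d' (e : Hom d d'), fmap F (ah_top (fmap H e)) ⋅ fmap F (a_arr (H d')) =
                          fmap F (a_arr (H d)) ⋅ fmap F (ah_bot (fmap H e))).
  { intros d d' e. rewrite <- !fmap_comp, ah_sq; reflexivity. }
  split.
  - split; [exact Hco|].
    intros Y t Ht0.
    assert (Ht : forall d d' (e : Hom d d'), Fmap (fmap H e) ⋅ t d' = t d) by exact Ht0.
    assert (Ct0 : is_cocone (fcomp (fcomp H TgtF) F) Y (fun d => Fc (H d) ⋅ t d)).
    { intros d d' e. simpl. rewrite <- (Ht d d' e), <- Fmap_cA; reflexivity. }
    destruct (colim_map C0c Ct0) as [h0 Hh0]. simpl in Hh0.
    destruct (scolim_nh C1s (ta := fun d => fmap F (a_arr (H d)) ⋅ (Fc (H d) ⋅ t d))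
      (tn := fun d => wh T (idm _) (Fg (H d)) (t d))) with (u := fmap F (a_arr X) ⋅ h0)
      as [p [Hp1 Hp2]].
    + intros d. simpl. rewrite bd_wh, Fg_bd; nrm; reflexivity.
    + intros d d' e. simpl. rewrite <- comp_assoc, FsqH, comp_assoc, <- Fmap_cA, Ht; reflexivity.
    + intros d d' e. simpl. rewrite whwh, !comp_id_r, <- (Ht d d' e), Fmap_g''; reflexivity.
    + intros d. simpl. rewrite <- comp_assoc, Fsq, comp_assoc, Hh0; reflexivity.
    + simpl in Hp2.
      assert (Char : forall u' : Hom (FK X) Y, (forall d, Fmap (i d) ⋅ u' = t d) ->
        Fc X ⋅ u' = h0 /\ wh T (idm _) (Fg X) u' = p).
      { intros u' Hu'.
        assert (Z1 : Fc X ⋅ u' = h0).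
        { apply (colim_uniq C0c). intros d. simpl. rewrite Hh0, <- Fmap_cA, Hu'; reflexivity. }
        split; [exact Z1|].
        apply (scolim_uniq C1c C1s).
        - rewrite Hp1, bd_wh, Fg_bd; nrm; rewrite Z1; reflexivity.
        - intros d. simpl. rewrite Hp2, whwh, !comp_id_r, <- (Hu' d), Fmap_g''; reflexivity. }
      destruct (cok_map (FC X) (Z := Y) (h := h0) (p := p) Hp1) as [u [U1 U2]].
      assert (Hu : forall d, Fmap (i d) ⋅ u = t d).
      { intros d. apply (cok_uniq (FC (H d))).
        - rewrite Fmap_cA, U1, Hh0; reflexivity.
        - rewrite Fmap_g'', (whR (fmap F (ah_top (i d))) (Fg X) u), U2, Hp2; reflexivity. }
      exists u. split; [exact Hu|].
      intros u' Hu'. destruct (Char u' Hu') as [Z1 Z2].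
      apply (cok_uniq (FC X)); [rewrite U1, Z1|rewrite U2, Z2]; reflexivity.
  - intros Y ta tn Htn Hta0 Htn0 u Hu0.
    assert (Hta : forall d d' (e : Hom d d'), Fmap (fmap H e) ⋅ ta d' = ta d) by exact Hta0.
    assert (Htn' : forall d d' (e : Hom d d'), wh T (Fmap (fmap H e)) (tn d') (idm Y) = tn d) by exact Htn0.
    assert (Hu : forall d, Fmap (i d) ⋅ u = ta d) by exact Hu0.
    assert (Htn1 : forall d, bd T (X := FK (H d)) (tn d) = ta d) by exact Htn.
    destruct (scolim_nh C0s (ta := fun d => Fc (H d) ⋅ ta d)
      (tn := fun d => wh T (Fc (H d)) (tn d) (idm Y))) with (u := Fc X ⋅ u)
      as [q [Hq1 Hq2]].
    + intros d. simpl. rewrite bd_wh, Htn1, comp_id_r; reflexivity.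
    + intros d d' e. simpl. rewrite <- Fmap_cA, Hta; reflexivity.
    + intros d d' e. simpl. rewrite whwh, comp_id_l, <- Fmap_c, whLL, Htn'; reflexivity.
    + intros d. simpl. rewrite <- Fmap_cA, Hu; reflexivity.
    + simpl in Hq2.
      assert (Cq : wh T (fmap F (a_arr X)) q (idm Y) = wh T (idm _) (Fg X) u).
      { apply (scolim_uniq C1c C1s).
        - rewrite !bd_wh, Hq1, Fg_bd; nrm; reflexivity.
        - intros d. simpl. rewrite !whwh, !comp_id_l, !comp_id_r, Fsq, whLL, Hq2, whwh, comp_id_l.
          rewrite <- (HRI (Fg_bd (H d)) (Htn1 d)), <- Hu, Fmap_g''; reflexivity. }
      destruct (scok_nh (FS X) Hq1 Cq) as [un [Un1 Un2]].
      exists un. split.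
      * split; [exact Un1|]. intros d.
        apply (scok_uniq HRI (FS (H d))) with (h := ta d); auto.
        -- simpl. rewrite bd_wh, Un1, comp_id_r, Hu; reflexivity.
        -- simpl. rewrite whwh, comp_id_l, Fmap_c, whLL, Un2, Hq2; reflexivity.
      * intros un' [B1 B2]. simpl in B1, B2.
        apply (scok_uniq HRI (FS X)) with (h := u); auto.
        rewrite Un2. apply (scolim_uniq C0c C0s).
        -- rewrite Hq1, bd_wh, B1, comp_id_r; reflexivity.
        -- intros d. simpl. rewrite Hq2, whwh, comp_id_l, <- Fmap_c, whLL, B2; reflexivity.
Qed.

End Main.

Section Uniq.
Variables (A B : Category) (T : NHStruct B) (HRI : reduced_interchange T)
  (I0 : A) (init : forall X : A, Hom I0 X) (Hinit : is_initial I0 init).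
Notation Γ := (GammaF A I0 init Hinit).
Notation Td := (ThetaDelta A).

Lemma cX_sq (X : ArrOb A) : a_arr (Γ (a_tgt X)) ⋅ idm _ = init (a_src X) ⋅ a_arr X.
Proof. simpl. rewrite comp_id_r. symmetry; apply Hinit. Qed.
Definition cX (X : ArrOb A) : ArrHom (Γ (a_tgt X)) X :=
  @Build_ArrHom A (Γ (a_tgt X)) X (init (a_src X)) (idm _) (cX_sq X).
Definition gX (X : ArrOb A) : NH Td (Γ (a_src X)) X := idm (a_src X).

Lemma cokX (X : ArrOb A) : is_cokernel Td (fmap Γ (a_arr X)) X (cX X) (gX X).
Proof.
  split.
  - apply ArrHom_eq; simpl; rewrite ?comp_id_l, ?comp_id_r; auto.
  - intros Z h p Hp.
    assert (P2 : p ⋅ a_arr Z = a_arr X ⋅ ah_bot h) by exact (f_equal ah_bot Hp).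
    exists (@Build_ArrHom A X Z p (ah_bot h) (eq_sym P2)). split.
    + split.
      * apply ArrHom_eq; simpl.
        -- etransitivity; [apply Hinit|symmetry; apply Hinit].
        -- apply comp_id_l.
      * simpl. rewrite comp_id_l, comp_id_l; reflexivity.
    + intros h'' [H1 H2]. apply ArrHom_eq; simpl.
      * rewrite <- H2; simpl; rewrite !comp_id_l; reflexivity.
      * rewrite <- H1; simpl; rewrite comp_id_l; reflexivity.
Qed.

Lemma cX_nat {X Y : ArrOb A} (f : ArrHom X Y) :
  (cX X : Hom (c:=Arr A) _ _) ⋅ f = fmap Γ (ah_bot f) ⋅ (cX Y : Hom (c:=Arr A) _ _).
Proof.
  apply ArrHom_eq; simpl.
  - etransitivity; [apply Hinit|symmetry; apply Hinit].
  - rewrite comp_id_l, comp_id_r; reflexivity.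
Qed.

Lemma slide {C : Category} (T0 : NHStruct C) X1 X2 X3 Y1 (p : NH T0 X1 X2) (h : Hom X2 X3)
  (f' : Hom X1 Y1) (q : NH T0 Y1 X3) (E : wh T0 (idm _) p h = wh T0 f' q (idm _)) W Z
  (f : Hom W X1) (k : Hom X3 Z) : wh T0 f p (h ⋅ k) = wh T0 (f ⋅ f') q k.
Proof.
  rewrite <- (comp_id_r f) at 1. rewrite <- whwh, E, whwh, comp_id_l; reflexivity.
Qed.
Lemma slide0 {C : Category} (T0 : NHStruct C) X1 X2 X3 Y1 (p : NH T0 X1 X2) (h : Hom X2 X3)
  (f' : Hom X1 Y1) (q : NH T0 Y1 X3) (E : wh T0 (idm _) p h = wh T0 f' q (idm _)) W
  (f : Hom W X1) : wh T0 f p h = wh T0 (f ⋅ f') q (idm _).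
Proof. rewrite <- (comp_id_r h), (slide E); reflexivity. Qed.
Lemma slideC {C : Category} (T0 : NHStruct C) X1 X2 X3 Y1 (p : NH T0 X2 X3) (g : Hom X1 X2)
  (g' : Hom X1 Y1) (q : NH T0 Y1 X3) (E : wh T0 g p (idm _) = wh T0 g' q (idm _)) W Z
  (f : Hom W X1) (k : Hom X3 Z) : wh T0 (f ⋅ g) p k = wh T0 (f ⋅ g') q k.
Proof.
  rewrite <- (comp_id_l k), <- !whwh, E; reflexivity.
Qed.
Lemma slideC1 {C : Category} (T0 : NHStruct C) X1 X2 X3 Y1 (p : NH T0 X2 X3) (g : Hom X1 X2)
  (g' : Hom X1 Y1) (q : NH T0 Y1 X3) (E : wh T0 g p (idm _) = wh T0 g' q (idm _)) Z
  (k : Hom X3 Z) : wh T0 g p k = wh T0 g' q k.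
Proof. rewrite <- (comp_id_l g), <- (comp_id_l g'), (slideC E); reflexivity. Qed.

Section G.
Variable (G : NHMorphism Td T).

Lemma G_gL {X Y : ArrOb A} (f : ArrHom X Y) :
  wh T (idm _) (nhmap G (gX X)) (fmap G f) = wh T (fmap G (fmap Γ (ah_top f))) (nhmap G (gX Y)) (idm _).
Proof.
  rewrite <- (fmap_id G), <- nhmap_wh, <- (fmap_id G), <- nhmap_wh. f_equal.
  simpl. rewrite !comp_id_l, !comp_id_r; reflexivity.
Qed.

Lemma G_cL {X Y : ArrOb A} (p : Hom (a_tgt X) (a_src Y)) :
  wh T (fmap G (cX X)) (nhmap G (p : NH Td X Y)) (idm _) =
  wh T (fmap G (fmap Γ p)) (nhmap G (gX Y)) (idm _).
Proof.
  rewrite <- (fmap_id G), <- !nhmap_wh. f_equal.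
  simpl. rewrite !comp_id_l, !comp_id_r; reflexivity.
Qed.
End G.

Section TwoMor.
Variables (G1 G2 : NHMorphism Td T) (HG1 : sends_cokernels_to_strong G1)
  (β : forall Y : A, Hom (nhF G1 (Γ Y)) (nhF G2 (Γ Y)))
  (Nβ : natural (fcomp Γ (nhF G1)) (fcomp Γ (nhF G2)) β).

Definition SG1 (X : ArrOb A) := HG1 (cokX X).

Lemma Nβ' {Y Z : A} (f : Hom Y Z) : fmap G1 (fmap Γ f) ⋅ β Z = β Y ⋅ fmap G2 (fmap Γ f).
Proof. exact (Nβ f). Qed.
Lemma Nβ'' {Y Z : A} (f : Hom Y Z) V (k : Hom (nhF G2 (Γ Z)) V) :
  fmap G1 (fmap Γ f) ⋅ (β Z ⋅ k) = β Y ⋅ (fmap G2 (fmap Γ f) ⋅ k).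
Proof. apply assoc_rw, Nβ'. Qed.

Lemma phi_data (X : ArrOb A) : {h : Hom (nhF G1 X) (nhF G2 X) |
  fmap G1 (cX X) ⋅ h = β (a_tgt X) ⋅ fmap G2 (cX X) /\
  wh T (idm _) (nhmap G1 (gX X)) h = wh T (β (a_src X)) (nhmap G2 (gX X)) (idm _)}.
Proof.
  apply (cok_map (scok_cok (SG1 X))).
  rewrite bd_wh, nhmap_bd, (cok_bd (cokX X)), comp_id_r, !fmap_comp, Nβ''; reflexivity.
Qed.
Definition phi X := proj1_sig (phi_data X).
Lemma phi_c X : fmap G1 (cX X) ⋅ phi X = β (a_tgt X) ⋅ fmap G2 (cX X).
Proof. exact (proj1 (proj2_sig (phi_data X))). Qed.
Lemma phi_g X : wh T (idm _) (nhmap G1 (gX X)) (phi X) = wh T (β (a_src X)) (nhmap G2 (gX X)) (idm _).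
Proof. exact (proj2 (proj2_sig (phi_data X))). Qed.

Lemma phi_nat : natural (nhF G1) (nhF G2) phi.
Proof.
  intros X Y f. apply (cok_uniq (scok_cok (SG1 X))).
  - rewrite <- comp_assoc, <- fmap_comp, cX_nat, fmap_comp, comp_assoc, phi_c, Nβ''.
    rewrite <- fmap_comp, <- cX_nat, fmap_comp, <- !comp_assoc, phi_c; reflexivity.
  - rewrite (slide (G_gL G1 f)), (slide (phi_g X)), !comp_id_l, (slide0 (phi_g Y)),
      (slide0 (G_gL G2 f)), Nβ'; reflexivity.
Qed.

Lemma phi_two : two_morphism G1 G2 phi.
Proof.
  split; [exact phi_nat|].
  intros X Y p.
  apply (scok_uniq HRI (SG1 X)) with (h := phi X ⋅ fmap G2 (bd Td p)).
  - rewrite bd_wh, nhmap_bd, comp_id_r; reflexivity.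
  - rewrite bd_wh, nhmap_bd, comp_id_l, phi_nat; reflexivity.
  - rewrite !whwh, !comp_id_l, !comp_id_r, phi_c, (slideC (G_cL G2 p)), (slideC1 (G_cL G1 p)),
      (slide0 (phi_g Y)), Nβ'; reflexivity.
Qed.
End TwoMor.

Lemma uniq_part (F : Functor A B) (G1 G2 : NHMorphism Td T) :
  sends_cokernels_to_strong G1 -> nat_iso (fcomp Γ (nhF G1)) F ->
  sends_cokernels_to_strong G2 -> nat_iso (fcomp Γ (nhF G2)) F -> nh_iso G1 G2.
Proof.
  intros HG1 [a1 [b1 [Na1 [Nb1 [I1 J1]]]]] HG2 [a2 [b2 [Na2 [Nb2 [I2 J2]]]]].
  assert (N12 : natural (fcomp Γ (nhF G1)) (fcomp Γ (nhF G2)) (fun Y => a1 Y ⋅ b2 Y)).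
  { intros X Y f. rewrite <- comp_assoc, Na1, comp_assoc, Nb2, comp_assoc; reflexivity. }
  assert (N21 : natural (fcomp Γ (nhF G2)) (fcomp Γ (nhF G1)) (fun Y => a2 Y ⋅ b1 Y)).
  { intros X Y f. rewrite <- comp_assoc, Na2, comp_assoc, Nb1, comp_assoc; reflexivity. }
  assert (E12 : forall Y V (k : Hom (nhF G1 (Γ Y)) V), a1 Y ⋅ b2 Y ⋅ (a2 Y ⋅ b1 Y ⋅ k) = k).
  { intros Y V k. rewrite !comp_assoc, <- (comp_assoc (b2 Y)), J2, comp_id_l, <- comp_assoc, I1, comp_id_l; reflexivity. }
  assert (E21 : forall Y V (k : Hom (nhF G2 (Γ Y)) V), a2 Y ⋅ b1 Y ⋅ (a1 Y ⋅ b2 Y ⋅ k) = k).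
  { intros Y V k. rewrite !comp_assoc, <- (comp_assoc (b1 Y)), J1, comp_id_l, <- comp_assoc, I2, comp_id_l; reflexivity. }
  exists (phi HG1 N12), (phi HG2 N21).
  split; [apply phi_two|split; [apply phi_two|split]].
  - intros X. apply (cok_uniq (scok_cok (SG1 HG1 X))).
    + rewrite <- comp_assoc, phi_c, comp_assoc, phi_c, comp_id_r; apply E12.
    + rewrite (slide (phi_g HG1 N12 X)), comp_id_l, (slide0 (phi_g HG2 N21 X)).
      f_equal. pose proof (E12 (a_src X) _ (idm _)) as E. rewrite comp_id_r in E. exact E.
  - intros X. apply (cok_uniq (scok_cok (SG1 HG2 X))).
    + rewrite <- comp_assoc, phi_c, comp_assoc, phi_c, comp_id_r; apply E21.
    + rewrite (slide (phi_g HG2 N21 X)), comp_id_l, (slide0 (phi_g HG1 N12 X)).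
      f_equal. pose proof (E21 (a_src X) _ (idm _)) as E. rewrite comp_id_r in E. exact E.
Qed.
End Uniq.

Theorem proposition4p1 (A B : Category)
  (HA : has_finite_colimits A)
  (I0 : A) (init : forall X : A, Hom I0 X) (Hinit : is_initial I0 init)
  (T : NHStruct B) (HRI : reduced_interchange T)
  (F : Functor A B)
  (Ha : preserves_finite_colimits_strong F T)
  (Hb : forall (X Y : A) (a : Hom X Y), has_strong_cokernel T (fmap F a)) :
  (exists Fh : NHMorphism (ThetaDelta A) T,
      sends_cokernels_to_strong Fh /\
      nat_iso (fcomp (GammaF A I0 init Hinit) (nhF Fh)) F /\
      preserves_finite_colimits_strong (nhF Fh) T)
  /\
  (forall G1 G2 : NHMorphism (ThetaDelta A) T,
      sends_cokernels_to_strong G1 -> nat_iso (fcomp (GammaF A I0 init Hinit) (nhF G1)) F ->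
      sends_cokernels_to_strong G2 -> nat_iso (fcomp (GammaF A I0 init Hinit) (nhF G2)) F ->
      nh_iso G1 G2).
Proof.
  split.
  - exists (Fh HRI Hb). split; [exact (Fh_sends HRI Ha Hb HA)|split].
    + exact (Gamma_iso Ha Hb Hinit).
    + exact (Fh_pres HRI Ha Hb HA).
  - intros G1 G2. apply (uniq_part HRI).
Qed.
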